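(* Let $V$ be a ground model, $\kappa$ an infinite cardinal, and $\mathbb{A}\in V$ an infinite Boolean algebra. Then for every $\varepsilon>0$ there are $\mathbb{M}_\kappa$-names $\dot{\mathcal{U}}$ and $\dot{\mathcal{V}}$ for ultrafilters on $\mathbb{A}$ such that $\Vdash_{\mathbb{M}_\kappa}\dot{\mathcal{U}}\neq\dot{\mathcal{V}}$, and for every $p\in\mathbb{M}_\kappa$ for which there is $A\in\mathbb{A}$ with $p\Vdash A\in\dot{\mathcal{U}}\setminus\dot{\mathcal{V}}$ we have $\lambda_\kappa(p)\le 1/4+\varepsilon$.
   Context: $\mathbb{M}_\kappa=Bor(2^\kappa)/\mathcal{N}_\kappa$ is the measure algebra of the standard product measure $\lambda_\kappa$ on $2^\kappa$ ($\lambda_\kappa$ also denotes the induced measure on $\mathbb{M}_\kappa$), used as a forcing notion (conditions are nonzero elements). An $\mathbb{M}_\kappa$-name for an ultrafilter on $\mathbb{A}$ is a name $\dot{\mathcal{U}}$ with $\Vdash_{\mathbb{M}_\kappa}$ ''$\dot{\mathcal{U}}$ is an ultrafilter on $\mathbb{A}$''. *)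

(* Defs.v *)
From HB Require Import structures.
From mathcomp Require Import all_boot all_order all_algebra.
From mathcomp Require Import all_classical all_reals all_analysis.
Set Implicit Arguments. Unset Strict Implicit. Unset Printing Implicit Defensive.
Import Order.TTheory GRing.Theory Num.Theory.
Local Open Scope classical_set_scope.
Local Open Scope ring_scope.

Definition cylinder (K : choiceType) (F : seq K) (s : K -> bool) : set (K -> bool) :=
  [set x | forall i, i \in F -> x i = s i].

Definition cylinders (K : choiceType) : set (set (K -> bool)) :=
  [set C | exists F s, uniq F /\ C = cylinder F s].

Definition cantorT (K : choiceType) := g_sigma_algebraType (@cylinders K).

(* mu is the standard product measure lambda_K: each coordinate is a fair coin,
   i.e. a cylinder fixing n coordinates has measure 2^-n.  (This determines mu
   uniquely on the product sigma-algebra, by the pi-lambda theorem.) *)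
Definition is_std_product_measure (R : realType) (K : choiceType)
  (mu : {measure set (cantorT K) -> \bar R}) : Prop :=
  forall (F : seq K) (s : K -> bool), uniq F ->
    mu (cylinder F s : set (cantorT K)) = ((2%:R ^- size F : R))%:E.

(* almost-everywhere equality of sets = equality in the measure algebra M_K *)
Definition meq (R : realType) (K : choiceType)
  (mu : {measure set (cantorT K) -> \bar R}) (X Y : set (cantorT K)) : Prop :=
  mu ((X `\` Y) `|` (Y `\` X)) = 0%E.

(* An M_K-name for an ultrafilter on the ground-model Boolean algebra A, given
   (in Boolean-valued form) by the map a |-> [[ a \in U ]] : A -> M_K, which must
   be a Boolean homomorphism into the measure algebra.  Elements of M_K are
   represented by measurable sets modulo mu-null sets. *)
Definition uf_name (R : realType) (K : choiceType)
  (mu : {measure set (cantorT K) -> \bar R})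
  (d : Order.disp_t) (A : ctbDistrLatticeType d) (U : A -> set (cantorT K)) : Prop :=
  [/\ (forall a, measurable (U a)),
      meq mu (U Order.top) setT,
      (forall a b, meq mu (U (Order.meet a b)) (U a `&` U b)) &
      (forall a, meq mu (U (Order.compl a)) (~` U a))].

(* condition p (measurable P with mu P > 0) forces a \in U \ V *)
Definition forces_in_diff (R : realType) (K : choiceType)
  (mu : {measure set (cantorT K) -> \bar R})
  (d : Order.disp_t) (A : ctbDistrLatticeType d) (U V : A -> set (cantorT K))
  (P : set (cantorT K)) (a : A) : Prop :=
  mu (P `\` (U a `\` V a)) = 0%E.

(* ||- U <> V : no condition forces U = V, i.e. every condition P is compatible
   with [[ a \in U ]] Delta [[ a \in V ]] for some a. *)
Definition forces_neq (R : realType) (K : choiceType)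
  (mu : {measure set (cantorT K) -> \bar R})
  (d : Order.disp_t) (A : ctbDistrLatticeType d) (U V : A -> set (cantorT K)) : Prop :=
  forall P : set (cantorT K), measurable P -> (0 < mu P)%E ->
    exists a : A, (0 < mu (P `&` ((U a `\` V a) `|` (V a `\` U a))))%E.

(* Main.v *)
Require Import Defs.
From HB Require Import structures.
From mathcomp Require Import all_boot all_order all_algebra.
From mathcomp Require Import all_classical all_reals all_analysis.
Import Order.TTheory GRing.Theory Num.Theory.
Local Open Scope classical_set_scope.
From mathcomp Require Import ring lra.
Local Open Scope ring_scope.

Set Implicit Arguments. Unset Strict Implicit.
Section UF.
Variables (d : Order.disp_t) (A : ctbDistrLatticeType d).

Definition ishom (h : A -> bool) :=
  [/\ h Order.top, (forall a b, h (Order.meet a b) = h a && h b) &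
      (forall a, h (Order.compl a) = ~~ h a)].

Lemma uf_exists (b : A) : b != Order.bottom -> exists h, ishom h /\ h b.
Proof.
move=> b0.
pose Pf (X : set A) := [/\ (forall x y, X x -> (x <= y)%O -> X y),
  (forall x y, X x -> X y -> X (Order.meet x y)), ~ X Order.bottom &
  (X = set0 \/ X b)].
have [M [[Mup Mmeet Mbot Mb] maxM]] : exists M, Pf M /\ forall B, M `<` B -> ~ Pf B.
  apply: Zorn_bigcup => F FP Ftot; split.
  - move=> x y [X FX Xx] xy; exists X => //; have [up _ _ _] := FP X FX; exact: up x y Xx xy.
  - move=> x y [X FX Xx] [Y FY Yy].
    have [XY|YX] := Ftot X Y FX FY.
      exists Y => //; have [_ mm _ _] := FP Y FY; apply: mm => //; exact: XY.
    exists X => //; have [_ mm _ _] := FP X FX; apply: mm => //; exact: YX.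
  - by move=> [X FX Xb]; have [_ _ + _] := FP X FX; apply.
  - have [[X FX Xb]|nX] := pselect (exists2 X, F X & X b).
      by right; exists X.
    left; apply/seteqP; split => // x [X FX Xx]; exfalso.
    have [_ _ _ [X0|]] := FP X FX; first by rewrite X0 in Xx.
    by move=> Xb; apply: nX; exists X.
have {}Mb : M b.
  case: Mb => // M0.
  pose B := [set y | (b <= y)%O].
  exfalso; apply: (maxM B).
    rewrite M0; split; first by [].
    by move=> /(_ b (lexx b)).
  split.
  - by move=> x y /= bx xy; exact: le_trans xy.
  - by move=> x y bx by0; rewrite /B /= lexI; apply/andP.
  - by rewrite /B /= lex0 (negbTE b0).
  - by right; rewrite /B /=.
have key a : ~ M a -> M (Order.compl a).
  move=> Ma.
  pose Ma' := [set y | exists2 x, M x & (Order.meet x a <= y)%O].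
  have [x Mx xa] : Ma' Order.bottom.
    apply: contrapT => Mab; apply: (maxM Ma').
      split; first by move=> x Mx; exists x => //; exact: leIl.
      by move=> /(_ a) H; apply: Ma; apply: H; exists b => //; exact: leIr.
    split.
    - by move=> x y [z Mz za] xy; exists z => //; exact: le_trans xy.
    - move=> x y [z Mz za] [w Mw wa]; exists (Order.meet z w); first exact: Mmeet.
      have -> : Order.meet (Order.meet z w) a = Order.meet (Order.meet z a) (Order.meet w a).
        by rewrite meetACA meetxx.
      exact: leI2.
    - exact: Mab.
    - by right; exists b => //; exact: leIl.
  apply: Mup Mx _; rewrite -Order.CTBDistrLatticeTheory.disj_leC -lex0; exact: xa.
exists (fun a => `[< M a >]); split; last exact/asboolP.
split.
- by apply/asboolP; apply: Mup Mb _; exact: lex1.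
- move=> x y; apply/asboolP/andP.
    by move=> Mxy; split; apply/asboolP; apply: Mup Mxy _; [exact: leIl|exact: leIr].
  by move=> [/asboolP Mx /asboolP My]; exact: Mmeet.
- move=> x; apply/asboolP/idP.
    move=> Mcx; apply/negP => /asboolP Mx; apply: Mbot.
    by rewrite -(Order.CTBDistrLatticeTheory.meetxC x); exact: Mmeet.
  by move=> /asboolP Mx; exact: key.
Qed.
End UF.
Section Homs.
Variables (d : Order.disp_t) (A : ctbDistrLatticeType d).

Lemma homs_n (n : nat) : infinite_set [set: A] ->
  exists hs : nat -> A -> bool, (forall i, (i < n)%N -> ishom (hs i)) /\
    (forall i j, (i < n)%N -> (j < n)%N -> i != j -> exists a, hs i a != hs j a).
Proof.
move=> Ainf; elim: n => [|n [hs [hom dist]]].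
  by exists (fun _ _ => true); split.
pose f (a : A) : {ffun 'I_n -> bool} := [ffun i : 'I_n => hs i a].
have [a [a' [faa' aa']]] : exists a a', f a = f a' /\ a <> a'.
  apply: contrapT => nex; apply: Ainf.
  have -> : [set: A] = f @^-1` [set: {ffun 'I_n -> bool}] by [].
  apply: finite_preimage => //.
  move=> x y _ _ fxy; apply: contrapT => xy; apply: nex; by exists x, y.
have [c [c0 cE]] : exists c, c != Order.bottom /\ forall i, (i < n)%N -> hs i c = false.
  have hsaa' i : (i < n)%N -> hs i a = hs i a'.
    move=> lin; have := congr1 (fun g : {ffun 'I_n -> bool} => g (Ordinal lin)) faa'.
    by rewrite /f !ffunE.
  have [c1|c1] := eqVneq (Order.meet a (Order.compl a')) Order.bottom; last first.
    exists (Order.meet a (Order.compl a')); split => // i lin.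
    have [_ hm hc] := hom i lin; by rewrite hm hc hsaa' // andbN.
  have [c2|c2] := eqVneq (Order.meet a' (Order.compl a)) Order.bottom; last first.
    exists (Order.meet a' (Order.compl a)); split => // i lin.
    have [_ hm hc] := hom i lin; by rewrite hm hc hsaa' // andbN.
  exfalso; apply: aa'; apply/eqP; rewrite eq_le.
  move/eqP: c1; rewrite Order.CTBDistrLatticeTheory.disj_leC Order.CTBDistrLatticeTheory.complK => ->.
  by move/eqP: c2; rewrite Order.CTBDistrLatticeTheory.disj_leC Order.CTBDistrLatticeTheory.complK => ->.
have [h [homh hc]] := uf_exists c0.
exists (fun k => if k == n then h else hs k); split.
  move=> i; rewrite ltnS leq_eqVlt => /orP[/eqP ->|lin]; first by rewrite eqxx.
  by rewrite (ltn_eqF lin); exact: hom.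
move=> i j; rewrite !ltnS (leq_eqVlt i) (leq_eqVlt j) => /orP[/eqP ->|lin] /orP[/eqP ->|ljn] ij.
- by rewrite eqxx in ij.
- exists c; rewrite eqxx (ltn_eqF ljn) hc cE //.
- exists c; rewrite eqxx (ltn_eqF lin) hc cE //.
- by rewrite (ltn_eqF lin) (ltn_eqF ljn); exact: dist.
Qed.

Lemma homs_fin (I : finType) : infinite_set [set: A] ->
  exists h : I -> A -> bool, (forall i, ishom (h i)) /\
    (forall i j, i != j -> exists a, h i a != h j a).
Proof.
move=> Ainf; have [hs [hom dist]] := homs_n #|I| Ainf.
exists (fun i => hs (enum_rank i)); split => [i|i j ij]; first exact: hom.
apply: dist => //; apply: contra ij => /eqP /val_inj /enum_rank_inj ->; exact: eqxx.
Qed.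
End Homs.
Section Fin.
Variables (dT : measure_display) (T : measurableType dT) (R : realType)
  (mu : {measure set T -> \bar R}) (P : finType) (pi : T -> P).
Hypothesis mfib : forall p, measurable [set x | pi x = p].

Lemma add_seq (X : set T) : measurable X -> forall s : seq P, uniq s ->
  measurable (X `&` [set x | pi x \in s]) /\
  mu (X `&` [set x | pi x \in s]) = (\sum_(p <- s) mu (X `&` [set x | pi x = p]))%E.
Proof.
move=> mX; elim => [|p s IH] /=.
  have -> : X `&` [set x | pi x \in ([::] : seq P)] = set0.
    by apply/seteqP; split => x //= [].
  by rewrite measure0 big_nil.
move=> /andP [ps us]; have [ms es] := IH us.
have E : X `&` [set x | pi x \in p :: s] =
   (X `&` [set x | pi x = p]) `|` (X `&` [set x | pi x \in s]).
  apply/seteqP; split => x /=.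
    by move=> [Xx]; rewrite inE => /orP [/eqP ->|xs]; [left|right].
  by move=> [[Xx <-]|[Xx xs]]; split => //; rewrite inE ?eqxx ?xs ?orbT.
have mp : measurable (X `&` [set x | pi x = p]) by apply: measurableI.
rewrite E; split; first exact: measurableU.
rewrite measureU // ?big_cons.
  by congr (_ + _)%E; exact: es.
apply/seteqP; split => x //= [[_ ->] [_ xs]]; by rewrite xs in ps.
Qed.

Lemma decomp (X : set T) : measurable X ->
  mu X = (\sum_(p : P) mu (X `&` [set x | pi x = p]))%E.
Proof.
move=> mX; have [_ e] := add_seq mX (enum_uniq P).
have E : X `&` [set x | pi x \in enum P] = X.
  by apply/seteqP; split => x //=; [case|move=> Xx; split => //; rewrite mem_enum].
by rewrite -{1}E e big_enum.
Qed.

Lemma meas_pre (W : pred P) : measurable [set x | W (pi x)].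
Proof.
have [m _] := add_seq (@measurableT _ T) (filter_uniq W (enum_uniq P)).
by move: m; rewrite setTI; congr measurable; apply/seteqP; split => x /=;
  rewrite mem_filter mem_enum andbT.
Qed.

Lemma mu_pre (W : pred P) (c : R) : (forall p, mu [set x | pi x = p] = c%:E) ->
  mu [set x | W (pi x)] = (#|W|%:R * c)%:E.
Proof.
move=> fc; have [_ e] := add_seq (@measurableT _ T) (filter_uniq W (enum_uniq P)).
have -> : [set x | W (pi x)] = [set: T] `&` [set x | pi x \in [seq q <- enum P | W q]].
  by rewrite setTI; apply/seteqP; split => x /=; rewrite mem_filter mem_enum andbT.
rewrite e big_filter.
under eq_bigr do rewrite setTI fc.
rewrite sumEFin big_enum_cond /= sumr_const; congr EFin.
by rewrite mulr_natl; congr (_ *+ _); apply: eq_card => p; rewrite inE.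
Qed.
End Fin.
Section Main.
Variables (R : realType) (K : choiceType) (mu : {measure set (cantorT K) -> \bar R}).
Hypothesis hstd : is_std_product_measure mu.
Variables (d : Order.disp_t) (A : ctbDistrLatticeType d) (t : nat).
Hypothesis t0 : (0 < t)%N.
Variables (e e' : 'I_t -> K).
Hypotheses (einj : injective e) (e'inj : injective e') (ee' : forall i j, e i != e' j).
Variable h : {ffun 'I_t -> bool} -> A -> bool.
Hypotheses (hom : forall u, ishom (h u)) (hd : forall u v, u != v -> exists a, h u a != h v a).

Local Notation I := {ffun 'I_t -> bool}.
Definition proj (x : cantorT K) : I * I := ([ffun i => x (e i)], [ffun i => x (e' i)]).
Arguments proj : simpl never.
Definition flipf (u : I) : I := [ffun i => ~~ u i].
Definition gsel (p : I * I) : I := if p.1 == p.2 then flipf p.1 else p.2.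

Definition cyl_s (p : I * I) (k : K) : bool :=
  [exists i, (e i == k) && p.1 i] || [exists i, (e' i == k) && p.2 i].
Definition cyl_F : seq K := map e (ord_enum t) ++ map e' (ord_enum t).

Lemma cyl_s_e p i : cyl_s p (e i) = p.1 i.
Proof.
rewrite /cyl_s; apply/orP/idP.
  case=> /existsP [j /andP [/eqP eji pj]].
    by have := einj eji => ji; rewrite -ji.
  by move: (ee' i j); rewrite eji eqxx.
by move=> pi; left; apply/existsP; exists i; rewrite eqxx.
Qed.

Lemma cyl_s_e' p i : cyl_s p (e' i) = p.2 i.
Proof.
rewrite /cyl_s; apply/orP/idP.
  case=> /existsP [j /andP [/eqP eji pj]]; last by have := e'inj eji => ji; rewrite -ji.
  by move: (ee' j i); rewrite eji eqxx.
by move=> pi; right; apply/existsP; exists i; rewrite eqxx.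
Qed.

Lemma cyl_uniq : uniq cyl_F.
Proof.
rewrite cat_uniq; apply/and3P; split; try by rewrite map_inj_uniq // ord_enum_uniq.
apply/hasPn => k /mapP [j _ ->]; apply/mapP => [[i _ /eqP]].
by rewrite eq_sym (negbTE (ee' i j)).
Qed.

Lemma cyl_size : size cyl_F = (t + t)%N.
Proof. by rewrite size_cat !size_map -(size_map val) val_ord_enum size_iota. Qed.

Lemma fiberE p : [set x : cantorT K | proj x = p] = cylinder cyl_F (cyl_s p).
Proof.
apply/seteqP; split => x /=.
  move=> <- k; rewrite mem_cat => /orP [] /mapP [i _ ->].
    by rewrite cyl_s_e /proj /= ffunE.
  by rewrite cyl_s_e' /proj /= ffunE.
move=> cx; case: p cx => u v cx; rewrite /proj; congr pair; apply/ffunP => i; rewrite ffunE.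
  by rewrite cx ?cyl_s_e // mem_cat map_f ?mem_ord_enum.
by rewrite cx ?cyl_s_e' // mem_cat map_f ?mem_ord_enum ?orbT.
Qed.

Lemma mfib p : measurable [set x : cantorT K | proj x = p].
Proof. rewrite fiberE; apply: sub_gen_smallest; exists cyl_F, (cyl_s p); split => //; exact: cyl_uniq. Qed.

Lemma mu_fib p : mu [set x : cantorT K | proj x = p] = ((2%:R ^- (t + t) : R))%:E.
Proof. by rewrite fiberE hstd ?cyl_size //; exact: cyl_uniq. Qed.

Lemma meq_refl (X : set (cantorT K)) : meq mu X X.
Proof. by rewrite /meq setDv setU0 measure0. Qed.

Lemma uf_of (k : I * I -> I) : uf_name mu (fun a => [set x : cantorT K | h (k (proj x)) a]).
Proof.
split.
- move=> a; exact: (meas_pre mu mfib (fun p => h (k p) a)).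
- have -> : [set x : cantorT K | h (k (proj x)) Order.top] = setT.
    by apply/seteqP; split => x //= _; have [] := hom (k (proj x)).
  exact: meq_refl.
- move=> a b; have -> : [set x : cantorT K | h (k (proj x)) (Order.meet a b)] =
     [set x | h (k (proj x)) a] `&` [set x | h (k (proj x)) b].
    apply/seteqP; split => x /=; have [_ -> _] := hom (k (proj x)); first by move/andP.
    by move=> [-> ->].
  exact: meq_refl.
- move=> a; have -> : [set x : cantorT K | h (k (proj x)) (Order.compl a)] =
     ~` [set x | h (k (proj x)) a].
    apply/seteqP; split => x /=; have [_ _ ->] := hom (k (proj x)); first by move/negP.
    by move/negP.
  exact: meq_refl.
Qed.

Definition Uf a := [set x : cantorT K | h (proj x).1 a].
Definition Vf a := [set x : cantorT K | h (gsel (proj x)) a].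

Lemma gsel_neq p : gsel p != p.1.
Proof.
rewrite /gsel; case: ifP => [_|/negbT]; last by rewrite eq_sym.
have i : 'I_t by exists 0%N.
apply/negP => /eqP E; have := congr1 (fun f : I => f i) E; rewrite /= ffunE; by case: (p.1 i).
Qed.

Lemma Uf_name : uf_name mu Uf.
Proof. exact: (uf_of (fun p => p.1)). Qed.
Lemma Vf_name : uf_name mu Vf.
Proof. exact: (uf_of gsel). Qed.

Lemma Uf_neq : forces_neq mu Uf Vf.
Proof.
move=> P mP P0.
have [p Pp] : exists p, (0 < mu (P `&` [set x | proj x = p]))%E.
  apply: contrapT => np; move: P0; rewrite (decomp mu mfib mP) big1 ?ltxx //.
  move=> p _; apply/eqP; rewrite eq_le measure_ge0 andbT leNgt; apply/negP => H.
  by apply: np; exists p.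
have [a ha] := hd (gsel_neq p).
exists a; apply: (lt_le_trans Pp); apply: le_measure; rewrite ?inE.
- by apply: measurableI => //; exact: mfib.
- have [mU _ _ _] := Uf_name; have [mV _ _ _] := Vf_name.
  apply: measurableI => //; apply: measurableU; apply: measurableD; [exact: mU|exact: mV|exact: mV|exact: mU].
- move=> x [Px px]; split => //.
  have {}px : proj x = p := px.
  change ((h (proj x).1 a /\ ~ h (gsel (proj x)) a) \/ (h (gsel (proj x)) a /\ ~ h (proj x).1 a)).
  move: ha; rewrite -px; case: (h (gsel (proj x)) a); case: (h (proj x).1 a) => //= _; [right|left]; split => //.
Qed.

Definition Wa a := [pred p : I * I | h p.1 a && ~~ h (gsel p) a].

Lemma Wa_card a : (#|Wa a| <= #|[set u : I | h u a]%SET| * (#|I| - #|[set u : I | h u a]%SET|) + #|I|)%N.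
Proof.
set S := [set u : I | h u a]%SET.
have sub : (Wa a \subset finset.setX S (~: S) :|: [set (u, u) | u in [set: I]])%SET.
  apply/fintype.subsetP => -[u v]; rewrite !inE /gsel /= => /andP [hu hv].
  case: eqP hv => [<- _|_ hv]; last by rewrite hu hv.
  by apply/orP; right; apply/finset.imsetP; exists u; rewrite ?inE.
apply: (leq_trans (subset_leq_card sub)); apply: (leq_trans (leq_card_setU _ _)).
rewrite cardsX leq_add //; last by apply: (leq_trans (leq_imset_card _ _)); rewrite cardsT.
by rewrite (cardsCs (~: S)) finset.setCK leqnn.
Qed.
Lemma real_bound (w k N : nat) : (0 < N)%N -> (k <= N)%N -> (w <= k * (N - k) + N)%N ->
  (w%:R * (N%:R * N%:R)^-1 <= (N%:R)^-1 + 1 / 4 :> R).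
Proof.
move=> N0 kN wl.
have n0 : (0 : R) < N%:R by rewrite ltr0n.
set n : R := N%:R in n0 *.
have x0 : (0 : R) <= k%:R by rewrite ler0n.
have xn : (k%:R : R) <= n by rewrite ler_nat.
have wl' : (w%:R : R) <= k%:R * (n - k%:R) + n.
  by rewrite -natrB // -natrM -natrD ler_nat.
rewrite ler_pdivrMr ?mulr_gt0 //.
have -> : ((n^-1 + 1 / 4) * (n * n) = n + n * n / 4 :> R).
  by field; rewrite gt_eqF.
have := sqr_ge0 (n - 2 * k%:R); rewrite expr2; nra.
Qed.

Lemma card_I : #|I| = (2 ^ t)%N.
Proof. by rewrite card_ffun card_bool card_ord. Qed.

Lemma Uf_bound (P : set (cantorT K)) a : measurable P -> (0 < mu P)%E ->
  forces_in_diff mu Uf Vf P a -> (mu P <= (((2 ^ t)%:R : R)^-1 + 1 / 4)%:E)%E.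
Proof.
move=> mP _ fid; rewrite /forces_in_diff in fid.
have [mU _ _ _] := Uf_name; have [mV _ _ _] := Vf_name.
have mD : measurable (Uf a `\` Vf a) by apply: measurableD.
have DE : Uf a `\` Vf a = [set x | Wa a (proj x)].
  apply/seteqP; split => x.
    move=> [hx1 hx2]; change (h (proj x).1 a && ~~ h (gsel (proj x)) a).
    by apply/andP; split => //; exact/negP.
  change (h (proj x).1 a && ~~ h (gsel (proj x)) a -> h (proj x).1 a /\ ~ h (gsel (proj x)) a).
  by move=> /andP [? /negP ?].
have e1 : mu P = mu (P `&` (Uf a `\` Vf a)).
  transitivity (mu (P `\` (Uf a `\` Vf a)) + mu (P `&` (Uf a `\` Vf a)))%E.
    exact: measureDI.
  by rewrite fid add0e.
rewrite e1.
apply: (@le_trans _ _ (mu (Uf a `\` Vf a))).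
  apply: le_measure; rewrite ?inE //; try exact: measurableI; exact: subIsetr.
have e2 : mu [set x | Wa a (proj x)] = (#|Wa a|%:R * 2%:R ^- (t + t))%:E.
  exact: (mu_pre mfib (Wa a) mu_fib).
rewrite DE e2 lee_fin.
have := Wa_card a; set k := #|_|; move=> wl.
have kN : (k <= #|I|)%N by rewrite /k; apply: max_card.
rewrite card_I in wl kN.
have -> : (2%:R ^- (t + t) : R) = (((2 ^ t)%:R * (2 ^ t)%:R)^-1 : R).
  by rewrite -natrM -expnD natrX.
apply: (real_bound _ kN wl); by rewrite ssrnat.expn_gt0.
Qed.

Lemma main_all : [/\ uf_name mu Uf, uf_name mu Vf, forces_neq mu Uf Vf &
  forall P a, measurable P -> (0 < mu P)%E -> forces_in_diff mu Uf Vf P a ->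
    (mu P <= (((2 ^ t)%:R : R)^-1 + 1 / 4)%:E)%E].
Proof. split; [exact: Uf_name | exact: Vf_name | exact: Uf_neq | exact: Uf_bound]. Qed.
End Main.
Unset Implicit Arguments.

Theorem corollary7p11 (R : realType) (K : choiceType)
  (mu : {measure set (cantorT K) -> \bar R})
  (d : Order.disp_t) (A : ctbDistrLatticeType d) :
  infinite_set [set: K] ->
  is_std_product_measure mu ->
  infinite_set [set: A] ->
  forall eps : R, 0 < eps ->
  exists U V : A -> set (cantorT K),
    [/\ uf_name mu U, uf_name mu V, forces_neq mu U V &
      forall (P : set (cantorT K)) (a : A),
        measurable P -> (0 < mu P)%E -> forces_in_diff mu U V P a ->
        (mu P <= (1 / 4 + eps)%:E)%E].
Proof.
move=> Kinf hstd Ainf eps eps0.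
have [t [t0 teps]] : exists t, (0 < t)%N /\ (((2 ^ t)%:R : R)^-1 <= eps).
  pose B := Num.Def.archi_bound (eps^-1).
  exists B.+1; split => //.
  rewrite invf_ple ?posrE ?ltr0n ?ssrnat.expn_gt0 //.
  apply: ltW; apply: (lt_le_trans (archi_boundP _)); first by rewrite invr_ge0 ltW.
  rewrite ler_nat; apply: (leq_trans (leqnSn B)); apply: ltnW; exact: ltn_expl.
have [Bs _ Bsize] := infinite_set_fset (t + t) Kinf.
have [x0 _] := infinite_setN0 Kinf.
pose sq := finmap.enum_fset Bs.
have usq : uniq sq := finmap.fset_uniq Bs.
have lt1 (i : 'I_t) : (i < size sq)%N.
  apply: leq_trans Bsize; apply: (leq_trans (ltn_ord i)); exact: leq_addr.
have lt2 (i : 'I_t) : (t + i < size sq)%N.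
  apply: leq_trans Bsize; by rewrite ltn_add2l.
pose e (i : 'I_t) := nth x0 sq i.
pose e' (i : 'I_t) := nth x0 sq (t + i).
have einj : injective e.
  move=> i j /eqP; rewrite /e nth_uniq // => /eqP; exact: val_inj.
have e'inj : injective e'.
  move=> i j /eqP; rewrite /e' nth_uniq // eqn_add2l => /eqP; exact: val_inj.
have ee' : forall i j, e i != e' j.
  move=> i j; rewrite /e /e' nth_uniq //; apply/negP => /eqP ij.
  by have := ltn_ord i; rewrite ij ltnNge leq_addr.
have [h [hom hd]] := homs_fin {ffun 'I_t -> bool} Ainf.
have [u1 u2 u3 u4] := main_all hstd t0 einj e'inj ee' hom hd.
exists (Uf e e' h), (Vf e e' h); split => // P a mP P0 fid.
apply: (le_trans (u4 P a mP P0 fid)); rewrite lee_fin.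
by rewrite addrC lerD2l.
Qed.
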